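(* Let $R$ be a ring with multiplicative identity, let $D\subset \mathcal{M}(R)^N$ be a free set, and let $f:D\to\mathcal{M}(R)^{\hat N}$ be a free map. Then the following are equivalent: (1) For every $n$, every $X\in D\cap\mathcal{M}_n(R)^N$ and every $H\in\mathcal{M}_n(R)^N$ with $\begin{pmatrix}X&H\\0&X\end{pmatrix}\in D$, the equality $Df(X)[H]=0$ implies $H=0$ (i.e. $Df(X)$ is nonsingular at every $X\in D$). (2) $f$ is injective on $D$. (3) $f$ is injective, and its inverse $f^{-1}:f(D)\to D$ is a free map (in particular $f(D)$ is a free set).
   Context: $\mathcal{M}_n(R)$ denotes the $n\times n$ matrices over $R$ and $\mathcal{M}(R)^N=\bigcup_{n\ge1}\mathcal{M}_n(R)^N$ is the set of $N$-tuples of square matrices of a common size. For tuples, $(A_1,\dots,A_N)\oplus(B_1,\dots,B_N)=(A_1\oplus B_1,\dots,A_N\oplus B_N)$ and $S^{-1}(A_1,\dots,A_N)S=(S^{-1}A_1S,\dots,S^{-1}A_NS)$; block matrices of tuples such as $\begin{pmatrix}X&H\\0&X\end{pmatrix}$ are formed coordinatewise. A free set $D\subset\mathcal{M}(R)^N$ is one with: $A,B\in D\Rightarrow A\oplus B\in D$, and $A\in D\cap\mathcal{M}_n(R)^N$, $S\in GL_n(R)$ $\Rightarrow S^{-1}AS\in D$. A free map $f:D\to\mathcal{M}(R)^{\hat N}$ on a free set $D$ sends $D\cap \mathcal{M}_n(R)^N$ into $\mathcal{M}_n(R)^{\hat N}$ and satisfies $f(A\oplus B)=f(A)\oplus f(B)$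 and $f(S^{-1}AS)=S^{-1}f(A)S$. Derivative: for $X\in D\cap\mathcal{M}_n(R)^N$ and $H\in\mathcal{M}_n(R)^N$ with $\begin{pmatrix}X&H\\0&X\end{pmatrix}\in D$, one has (standing convention of the paper, used as the definition of the derivative) $f\begin{pmatrix}X&H\\0&X\end{pmatrix}=\begin{pmatrix}f(X)&Df(X)[H]\\0&f(X)\end{pmatrix}$, i.e. $Df(X)[H]$ is the upper-right $n\times n$ block of $f\begin{pmatrix}X&H\\0&X\end{pmatrix}$. *)

(* Defs.v *)
From HB Require Import structures.
From mathcomp Require Import all_boot all_order all_algebra.
Set Implicit Arguments. Unset Strict Implicit. Unset Printing Implicit Defensive.
Import GRing.Theory.
Local Open Scope ring_scope.

Definition mtup (R : pzRingType) (N n : nat) := {ffun 'I_N -> 'M[R]_n}.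

(* A subset of M(R)^N = union over n of M_n(R)^N, given sizewise *)
Definition fset (R : pzRingType) (N : nat) := forall n : nat, mtup R N n -> Prop.
Definition fmap (R : pzRingType) (N Nh : nat) := forall n : nat, mtup R N n -> mtup R Nh n.

Definition tdsum (R : pzRingType) N n m (A : mtup R N n) (B : mtup R N m)
  : mtup R N (n + m) := [ffun i => block_mx (A i) 0 0 (B i)].

(* S invertible with inverse T : S^-1 A S is written T A S *)
Definition inv_pair (R : pzRingType) n (S T : 'M[R]_n) :=
  S *m T = 1%:M /\ T *m S = 1%:M.

Definition tconj (R : pzRingType) N n (T : 'M[R]_n) (A : mtup R N n) (S : 'M[R]_n)
  : mtup R N n := [ffun i => T *m A i *m S].

Definition tblk (R : pzRingType) N n (X H : mtup R N n) : mtup R N (n + n) :=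
  [ffun i => block_mx (X i) (H i) 0 (X i)].

Definition is_free_set (R : pzRingType) N (D : fset R N) : Prop :=
  (forall n A, D n A -> (0 < n)%N) /\
  (forall n m A B, D n A -> D m B -> D (n + m)%N (tdsum A B)) /\
  (forall n A S T, D n A -> inv_pair S T -> D n (tconj T A S)).

Definition is_free_map (R : pzRingType) N Nh (D : fset R N) (f : fmap R N Nh) : Prop :=
  (forall n m A B, D n A -> D m B -> f (n + m)%N (tdsum A B) = tdsum (f n A) (f m B)) /\
  (forall n A S T, D n A -> inv_pair S T -> f n (tconj T A S) = tconj T (f n A) S).

Definition Dfree (R : pzRingType) N Nh (f : fmap R N Nh) n (X H : mtup R N n)
  : mtup R Nh n := [ffun i => ursubmx (f (n + n)%N (tblk X H) i)].

Definition free_image (R : pzRingType) N Nh (D : fset R N) (f : fmap R N Nh) : fset R Nh :=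
  fun n Y => exists X, D n X /\ f n X = Y.

Definition inj_on (R : pzRingType) N Nh (D : fset R N) (f : fmap R N Nh) : Prop :=
  forall n A B, D n A -> D n B -> f n A = f n B -> A = B.

(* Main.v *)
Require Import Defs.
From HB Require Import structures.
From mathcomp Require Import all_boot all_order all_algebra.
From Stdlib Require Import ClassicalEpsilon.
Local Open Scope ring_scope.
Import GRing.Theory.

Section Aux.
Variable R : pzRingType.

Lemma conj_block m k (S : 'M[R]_(m, k)) (a : 'M[R]_m) (b : 'M[R]_k) :
  block_mx 1%:M (- S) 0 1%:M *m block_mx a 0 0 b *m block_mx 1%:M S 0 1%:M
  = block_mx a (a *m S - S *m b) 0 b.
Proof.
rewrite !mulmx_block ?mul1mx ?mulmx1 ?mul0mx ?mulmx0 ?addr0 ?add0r ?mul1mx ?mulmx1 ?mul0mx ?mulmx0 ?addr0 ?add0r.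
by rewrite mulNmx addrC.
Qed.

Lemma inv_block m k (S : 'M[R]_(m, k)) :
  Defs.inv_pair (block_mx 1%:M S 0 1%:M) (block_mx 1%:M (- S) 0 1%:M).
Proof.
rewrite /Defs.inv_pair; split; rewrite mulmx_block ?mul1mx ?mulmx1 ?mul0mx ?addr0 ?add0r.
- by rewrite mulmx0 addr0 addrC subrr -scalar_mx_block.
- by rewrite mulmx0 addr0 subrr -scalar_mx_block.
Qed.
End Aux.

Section Main.
Variables (R : pzRingType) (N Nh : nat) (D : fset R N) (f : fmap R N Nh).
Hypothesis HD : is_free_set D.
Hypothesis Hf : is_free_map D f.

Lemma key m k (A : mtup R N m) (B : mtup R N k) (S : 'M[R]_(m, k)) :
  D m A -> D k B ->
  f (m + k)%N (tconj (block_mx 1%:M (- S) 0 1%:M) (tdsum A B) (block_mx 1%:M S 0 1%:M))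
  = [ffun i => block_mx (f m A i) (f m A i *m S - S *m f k B i) 0 (f k B i)].
Proof.
move=> DA DB.
have DAB : D (m + k)%N (tdsum A B) by apply: (proj1 (proj2 HD)).
rewrite (proj2 Hf) //; last exact: inv_block.
rewrite (proj1 Hf) //; apply/ffunP => i; rewrite !ffunE.
exact: conj_block.
Qed.

Lemma intertw m k (A : mtup R N m) (B : mtup R N k) (S : 'M[R]_(m, k)) :
  D m A -> D k B -> (forall i, A i *m S = S *m B i) ->
  forall i, f m A i *m S = S *m f k B i.
Proof.
move=> DA DB HAB i.
have E : tconj (block_mx 1%:M (- S) 0 1%:M) (tdsum A B) (block_mx 1%:M S 0 1%:M)
   = tdsum A B.
  by apply/ffunP => j; rewrite !ffunE conj_block HAB subrr.
have := @key m k A B S DA DB; rewrite E (proj1 Hf) // => /ffunP /(_ i).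
rewrite !ffunE => /eq_block_mx [_ H _ _].
by apply/eqP; rewrite -subr_eq0 -H.
Qed.


Lemma inj_nonsing : inj_on D f -> forall n (X H : mtup R N n), D n X ->
  D (n + n)%N (tblk X H) -> Dfree f X H = [ffun=> 0] -> H = [ffun=> 0].
Proof.
move=> Hinj n X H DX DZ H0.
have h1 : forall i, f _ (tblk X H) i *m col_mx 1%:M 0 = col_mx 1%:M 0 *m f n X i.
  apply: (@intertw (n + n) n (tblk X H) X) => // i.
  by rewrite ffunE mul_block_col mul_col_mx !mulmx1 !mulmx0 !mul1mx !mul0mx addr0 add0r.
have h2 : forall i, f n X i *m row_mx 0 1%:M = row_mx 0 1%:M *m f _ (tblk X H) i.
  apply: (@intertw n (n + n) X (tblk X H)) => // i.
  by rewrite ffunE mul_row_block mul_mx_row !mulmx1 !mulmx0 !mul1mx !mul0mx addr0 add0r.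
have EZ : f _ (tblk X H) = f _ (tdsum X X).
  rewrite (proj1 Hf) //; apply/ffunP => i; rewrite ffunE.
  have u : ursubmx (f _ (tblk X H) i) = 0.
    by move/ffunP: H0 => /(_ i); rewrite !ffunE.
  move: (h1 i) (h2 i); rewrite -[f _ (tblk X H) i]submxK u.
  rewrite mul_block_col mul_col_mx mul_row_block mul_mx_row.
  rewrite !mulmx1 !mulmx0 !mul1mx !mul0mx ?addr0 ?add0r.
  by move=> /eq_col_mx [-> ->] /eq_row_mx [_ ->].
have := Hinj _ _ _ DZ (proj1 (proj2 HD) _ _ _ _ DX DX) EZ.
move=> /ffunP E; apply/ffunP => i; move: (E i); rewrite !ffunE.
by move=> /eq_block_mx [_ -> _ _].
Qed.


Lemma nonsing_inj : (forall n (X H : mtup R N n), D n X ->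
  D (n + n)%N (tblk X H) -> Dfree f X H = [ffun=> 0] -> H = [ffun=> 0]) ->
  inj_on D f.
Proof.
move=> Hns n X Y DX DY E.
have DW : D (n + n)%N (tdsum X Y) by apply: (proj1 (proj2 HD)).
pose K : 'M[R]_(n + n) := block_mx 0 1%:M 0 0.
have Hkey := @key (n + n) (n + n) _ _ K DW DW.
pose Hh : mtup R N (n + n) := [ffun i => tdsum X Y i *m K - K *m tdsum X Y i].
have EZ : tconj (block_mx 1%:M (- K) 0 1%:M) (tdsum (tdsum X Y) (tdsum X Y))
            (block_mx 1%:M K 0 1%:M) = tblk (tdsum X Y) Hh.
  by apply/ffunP => i; rewrite !ffunE conj_block.
have DZ : D _ (tblk (tdsum X Y) Hh).
  rewrite -EZ; apply: (proj2 (proj2 HD)); last exact: inv_block.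
  exact: (proj1 (proj2 HD)).
have := Hns _ _ Hh DW DZ.
have HD0 : Dfree f (tdsum X Y) Hh = [ffun=> 0].
  apply/ffunP => i; rewrite !ffunE -EZ Hkey ffunE block_mxKur.
  rewrite (proj1 Hf) // E !ffunE /K !mulmx_block.
  rewrite !mulmx1 !mulmx0 !mul1mx !mul0mx ?addr0 ?add0r.
  rewrite opp_block_mx add_block_mx !subrr.
  by apply/eqP; rewrite block_mx_eq0 !eqxx.
move=> /(_ HD0) /ffunP Hh0; apply/ffunP => i; move: (Hh0 i).
rewrite !ffunE /K !mulmx_block !mulmx1 !mulmx0 !mul1mx !mul0mx ?addr0 ?add0r.
rewrite opp_block_mx add_block_mx => /eqP; rewrite block_mx_eq0.
by case/and4P => _ h _ _; apply/eqP; rewrite -subr_eq0.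
Qed.


Lemma inv_part : inj_on D f -> is_free_set (free_image D f) /\
    exists g : fmap R Nh N, is_free_map (free_image D f) g /\
      (forall n X, D n X -> g n (f n X) = X).
Proof.
move=> Hinj.
have [Hpos [Hsum Hconj]] := HD.
have [Fsum Fconj] := Hf.
split.
  split; [|split].
  - by move=> n A [X [DX _]]; exact: Hpos DX.
  - move=> n m A B [X [DX <-]] [Y [DY <-]].
    by exists (tdsum X Y); split; [exact: Hsum | exact: Fsum].
  - move=> n A S T [X [DX <-]] ST.
    by exists (tconj T X S); split; [exact: Hconj | exact: Fconj].
pose g : fmap R Nh N := fun n Y =>
  epsilon (inhabits ([ffun=> 0] : mtup R N n)) (fun X => D n X /\ f n X = Y).
have gK : forall n X, D n X -> g n (f n X) = X.
  move=> n X DX.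
  have [h1 h2] := epsilon_spec (inhabits ([ffun=> 0] : mtup R N n))
     (fun X' => D n X' /\ f n X' = f n X) (ex_intro _ X (conj DX erefl)).
  exact: Hinj h1 DX h2.
exists g; split => //; split.
- move=> n m A B [X [DX <-]] [Y [DY <-]].
  by rewrite -Fsum // !gK //; exact: Hsum.
- move=> n A S T [X [DX <-]] ST.
  by rewrite -Fconj // !gK //; exact: Hconj.
Qed.

End Main.

Theorem mainTheorem1 (R : pzRingType) (N Nh : nat) (D : fset R N) (f : fmap R N Nh)
  (HD : is_free_set D) (Hf : is_free_map D f) :
  ((forall n (X H : mtup R N n), D n X -> D (n + n)%N (tblk X H) ->
      Dfree f X H = [ffun=> 0] -> H = [ffun=> 0])
   <-> inj_on D f)
  /\
  (inj_on D f <->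
   (inj_on D f /\ is_free_set (free_image D f) /\
    exists g : fmap R Nh N, is_free_map (free_image D f) g /\
      (forall n X, D n X -> g n (f n X) = X))).
Proof.
split; split.
- exact: nonsing_inj.
- exact: inj_nonsing.
- by move=> Hi; split => //; apply: inv_part.
- by case.
Qed.
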